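(* Let $E$ be a complex vector space of dimension $e$, let $U$ be a complex orthogonal vector space of dimension $2k+1$ ($k\ge1$), and let $V=\operatorname{Sym}(E\otimes U)$ with the commuting actions of $\mathfrak{g}=\mathfrak{so}(U)$ and $H=\mathfrak{gl}(E)$. Write $U=\mathbf{C}\oplus(U_1\oplus U_1^* )\oplus\cdots\oplus(U_k\oplus U_k^* )$, where $U_i,U_i^*$ are isotropic lines paired by the form, $\mathbf{C}$ is a non-isotropic line, and the summands are mutually orthogonal; let the Cartan subalgebra of $\mathfrak{so}(U)$ be the elements preserving each of these lines, with weights identified with $k$-tuples via $\varepsilon_i$ = weight on $U_i$. For $n\in\mathbf{Z}$ let $L_n=\bigoplus_{d\ge0}\operatorname{Sym}^d(E)\otimes\operatorname{Sym}^{d+n}(E)$ (with $\operatorname{Sym}^m=0$ for $m<0$). Then for every $\chi\in\mathbf{Z}^k$, as $H$-representations, \[ V_\chi\cong \operatorname{Sym}(E)\otimes L_{\chi_1}\otimes\cdots\otimes L_{\chi_k}. \]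
   Context: $V_\chi$ denotes the $\chi$-weight space of $V$ for the Cartan subalgebra described in the claim. *)

(* Defs.v *)
From HB Require Import structures.
From mathcomp Require Import all_boot all_order all_algebra.
From mathcomp Require Import complex mxtens.
From mathcomp Require Import reals.
From mathcomp Require Import mpoly.
Set Implicit Arguments. Unset Strict Implicit. Unset Printing Implicit Defensive.
Import GRing.Theory Num.Theory.
Local Open Scope ring_scope.

Section Defs.
Variable C : fieldType.

(* Action of gl(W), W = C^N with basis the variables 'X_r, on Sym(W) =
   {mpoly C[N]}: the derivation extending  x_s |-> \sum_r M r s x_r. *)
Definition symder (N : nat) (M : 'M[C]_N) (p : {mpoly C[N]}) : {mpoly C[N]} :=
  \sum_(r < N) \sum_(s < N) M r s *: ('X_r * mderiv s p).

Variables (e k : nat).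
(* U = C^(2k+1), basis u_0, u_1, u_1^*, ..., u_k, u_k^* :
   index 0 = non-isotropic line C, 2i+1 = U_(i+1), 2i+2 = U_(i+1)^*. *)
Notation u := (2 * k).+1.
Definition uidx (i : 'I_k) : 'I_u := inord (2 * i + 1).
Definition udidx (i : 'I_k) : 'I_u := inord (2 * i + 2).

Definition gramU : 'M[C]_u := \matrix_(r, s)
  (((r == ord0) && (s == ord0)) ||
   [exists i : 'I_k, ((r == uidx i) && (s == udidx i)) ||
                     ((r == udidx i) && (s == uidx i))])%:R.

Definition soU : pred 'M[C]_u := fun X => X^T *m gramU + gramU *m X == 0.

(* Cartan subalgebra: elements of so(U) preserving each of the lines
   C u_0, C u_i, C u_i^*, i.e. diagonal in this basis. *)
Definition cartanU : pred 'M[C]_u := fun X => soU X && is_diag_mx X.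

Definition weight_of (chi : 'I_k -> int) (X : 'M[C]_u) : C :=
  \sum_(i < k) (chi i)%:~R * X (uidx i) (uidx i).

(* V = Sym(E (x) U) with E = C^e; E (x) U = C^(e*u) via mxtens_index. *)
Definition Vsp := {mpoly C[e * u]}.

Definition actH (A : 'M[C]_e) (p : {mpoly C[e * u]}) : {mpoly C[e * u]} :=
  symder (A *t (1%:M : 'M[C]_u)) p.

Definition actG (X : 'M[C]_u) (p : {mpoly C[e * u]}) : {mpoly C[e * u]} :=
  symder ((1%:M : 'M[C]_e) *t X) p.

Definition weight_space (chi : 'I_k -> int) (p : {mpoly C[e * u]}) : Prop :=
  forall X : 'M[C]_u, cartanU X -> actG X p = weight_of chi X *: p.

(* Tensor products of symmetric algebras are realized through the canonical
   identification Sym(E) (x) ... (x) Sym(E) (2k+1 factors) = Sym(E (x) C^(2k+1))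
   (same polynomial ring as V, but a different role of the slots):
     slot 0      <-> the factor Sym(E),
     slot 2i+1   <-> the factor Sym^d(E)     of L_(chi_i),
     slot 2i+2   <-> the factor Sym^(d+n)(E) of L_(chi_i).
   blockdeg m j = total degree of the monomial m in slot j. *)
Definition blockdeg (mon : 'X_{1..e * u}) (j : 'I_u) : nat :=
  (\sum_(a < e) mon (mxtens_index (a, j)))%N.

Definition rhs_space (chi : 'I_k -> int) (q : {mpoly C[e * u]}) : Prop :=
  forall mon, mon \in msupp q -> forall i : 'I_k,
    (blockdeg mon (udidx i))%:Z = (blockdeg mon (uidx i))%:Z + chi i.

(* H acts diagonally on the tensor product, i.e. by A (x) 1 on E (x) C^(2k+1);
   this is again [actH]. *)
Definition H_iso (P Q : {mpoly C[e * u]} -> Prop) : Prop :=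
  exists f : {linear {mpoly C[e * u]} -> {mpoly C[e * u]}},
    [/\ forall p, P p -> Q (f p),
        forall p1 p2, P p1 -> P p2 -> f p1 = f p2 -> p1 = p2,
        forall q, Q q -> exists2 p, P p & f p = q
      & forall (A : 'M[C]_e) p, P p -> f (actH A p) = actH A (f p)].
End Defs.

(* Main.v *)
Require Import Defs.
From HB Require Import structures.
From mathcomp Require Import all_boot all_order all_algebra all_fingroup.
From mathcomp Require Import complex mxtens.
From mathcomp Require Import reals.
From mathcomp Require Import mpoly.
From mathcomp Require Import zify.
Set Implicit Arguments. Unset Strict Implicit. Unset Printing Implicit Defensive.
Import GRing.Theory Num.Theory.
Local Open Scope ring_scope.
Lemma sum_split_nat (V : nmodType) (G : nat -> V) n :
  \sum_(0 <= j < (2 * n).+1) G j = G 0%N + \sum_(0 <= i < n) (G (2 * i + 1)%N + G (2 * i + 2)%N).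
Proof.
elim: n => [|n IH]; first by rewrite muln0 big_nat1 big_geq // addr0.
have -> : (2 * n.+1).+1 = ((2 * n).+1).+2 by lia.
rewrite big_nat_recr //= big_nat_recr //= IH big_nat_recr //= -!addrA.
congr (_ + (_ + _)); congr (_ + _); congr G; lia.
Qed.

Section Idx.
Variable k : nat.

Definition pif (j : nat) : nat := if j == 0%N then 0%N else if odd j then j.+1 else j.-1.

Lemma pif_lt j : (j < (2 * k).+1)%N -> (pif j < (2 * k).+1)%N.
Proof. rewrite /pif; case: ifP => _ //; case: ifP => h; lia. Qed.

Lemma pifK j : pif (pif j) = j.
Proof.
rewrite /pif; have [->//|h0] := eqVneq j 0%N.
case ho: (odd j) => /=; repeat case: ifP => ?; lia.
Qed.

Definition piu (j : 'I_(2 * k).+1) : 'I_(2 * k).+1 := inord (pif j).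

Lemma piu_val j : (piu j : nat) = pif j.
Proof. by rewrite /piu inordK // pif_lt. Qed.

Lemma piuK : involutive piu.
Proof. by move=> j; apply: val_inj => /=; rewrite !piu_val pifK. Qed.

Lemma uidx_val (i : 'I_k) : (uidx i : nat) = (2 * i + 1)%N.
Proof. rewrite /uidx inordK //; have := ltn_ord i; lia. Qed.
Lemma udidx_val (i : 'I_k) : (udidx i : nat) = (2 * i + 2)%N.
Proof. rewrite /udidx inordK //; have := ltn_ord i; lia. Qed.

Lemma piu_uidx (i : 'I_k) : piu (uidx i) = udidx i.
Proof. apply: val_inj => /=; rewrite piu_val udidx_val uidx_val /pif; repeat case: ifP => ?; lia. Qed.
Lemma piu_udidx (i : 'I_k) : piu (udidx i) = uidx i.
Proof. by rewrite -piu_uidx piuK. Qed.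

Lemma uidx_eq (i j : 'I_k) : (uidx i == uidx j) = (i == j).
Proof. apply/eqP/eqP => [/(congr1 (@nat_of_ord _))|->//]; rewrite !uidx_val => h; apply: val_inj => /=; lia. Qed.
Lemma udidx_eq (i j : 'I_k) : (udidx i == udidx j) = (i == j).
Proof. apply/eqP/eqP => [/(congr1 (@nat_of_ord _))|->//]; rewrite !udidx_val => h; apply: val_inj => /=; lia. Qed.
Lemma uidx_udidx (i j : 'I_k) : (uidx i == udidx j) = false.
Proof. apply/eqP => /(congr1 (@nat_of_ord _)); rewrite uidx_val udidx_val; lia. Qed.
Lemma udidx_uidx (i j : 'I_k) : (udidx i == uidx j) = false.
Proof. apply/eqP => /(congr1 (@nat_of_ord _)); rewrite uidx_val udidx_val; lia. Qed.
Lemma uidx_0 (i : 'I_k) : (uidx i == ord0) = false.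
Proof. apply/eqP => /(congr1 (@nat_of_ord _)); rewrite uidx_val /=; lia. Qed.
Lemma udidx_0 (i : 'I_k) : (udidx i == ord0) = false.
Proof. apply/eqP => /(congr1 (@nat_of_ord _)); rewrite udidx_val /=; lia. Qed.

Lemma sum_split (V : nmodType) (F : 'I_(2 * k).+1 -> V) :
  \sum_j F j = F ord0 + \sum_(i < k) (F (uidx i) + F (udidx i)).
Proof.
have -> : \sum_j F j = \sum_(0 <= j < (2 * k).+1) F (inord j).
  by rewrite big_mkord; apply: eq_bigr => j _; rewrite inord_val.
have -> : \sum_(i < k) (F (uidx i) + F (udidx i)) =
          \sum_(0 <= i < k) (F (inord (2 * i + 1)) + F (inord (2 * i + 2))).
  by rewrite big_mkord.
have -> : F ord0 = F (inord 0) by congr F; apply: val_inj; rewrite /= inordK.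
exact: (sum_split_nat (fun j => F (inord j))).
Qed.
End Idx.
Section Gen.
Variables (C : fieldType) (N : nat).
Implicit Types (p q : {mpoly C[N]}) (M D : 'M[C]_N).

Lemma mono_ext (V : lmodType C) (f g : {mpoly C[N]} -> V) :
  (forall a p q, f (a *: p + q) = a *: f p + f q) ->
  (forall a p q, g (a *: p + q) = a *: g p + g q) ->
  (forall m, f 'X_[m] = g 'X_[m]) -> forall p, f p = g p.
Proof.
move=> hf hg hm p.
have f0 : forall h : {mpoly C[N]} -> V, (forall a p q, h (a *: p + q) = a *: h p + h q) -> h 0 = 0.
  move=> h hh; have := hh (-1) 0 0; rewrite scaler0 addr0 => ->.
  by rewrite scaleN1r addNr.
rewrite (mpolyE p); elim: (msupp p) => [|m s IH]; first by rewrite big_nil !f0.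
by rewrite big_cons hf hg hm IH.
Qed.

Lemma symder_lin M a p q : symder M (a *: p + q) = a *: symder M p + symder M q.
Proof.
rewrite /symder scaler_sumr -big_split /=; apply: eq_bigr => r _.
rewrite scaler_sumr -big_split /=; apply: eq_bigr => t _.
by rewrite mderivD mderivZ mulrDr -scalerAr scalerDr !scalerA mulrC.
Qed.

Lemma msym_X1 (s : 'S_N) r : msym s 'X_r = 'X_(s r) :> {mpoly C[N]}.
Proof.
rewrite msymX; congr 'X_[_]; apply/mnmP => i.
rewrite mnmE !mnm1E; congr (nat_of_bool _); by rewrite -[X in X = _](inj_eq (@perm_inj _ s)) permKV.
Qed.


Lemma inv_eq (s : 'S_N) a b : (a == (s^-1)%g b) = (s a == b).
Proof. by rewrite -[LHS](inj_eq (@perm_inj _ s)) permKV. Qed.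

Lemma mderiv_msym (s : 'S_N) t p :
  mderiv (s t) (msym s p) = msym s (mderiv t p).
Proof.
apply: (mono_ext (f := fun p => mderiv (s t) (msym s p))
                 (g := fun p => msym s (mderiv t p))) => [a p1 q1|a p1 q1|m] /=.
- by rewrite msymD msymZ mderivD mderivZ.
- by rewrite mderivD mderivZ msymD msymZ.
rewrite msymX !mderivX msymZ msymX mnmE permK; congr (_ *: 'X_[_]).
apply/mnmP => i; by rewrite !mnmE inv_eq.
Qed.

Lemma msym_symder (s : 'S_N) M p : (forall a b, M (s a) (s b) = M a b) ->
  msym s (symder M p) = symder M (msym s p).
Proof.
move=> hM; rewrite /symder raddf_sum [RHS](reindex_inj (@perm_inj _ s)).
apply: eq_bigr => r _; rewrite raddf_sum [RHS](reindex_inj (@perm_inj _ s)).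
apply: eq_bigr => t _ /=; by rewrite msymZ msymM msym_X1 mderiv_msym hM.
Qed.

Lemma symder_diag D p m : (forall r t, r != t -> D r t = 0) ->
  (symder D p)@_m = (\sum_r D r r * (m r)%:R) * p@_m.
Proof.
move=> hD.
apply: (@mono_ext C^o (fun p => (symder D p)@_m)
                 (fun p => (\sum_r D r r * (m r)%:R) * p@_m)) => [a p1 q1|a p1 q1|m'] /=.
- by rewrite symder_lin mcoeffD mcoeffZ.
- by rewrite mcoeffD mcoeffZ mulrDr mulrCA.
have -> : symder D 'X_[m'] = (\sum_r D r r * (m' r)%:R) *: 'X_[m'].
  rewrite /symder scaler_suml; apply: eq_bigr => r _.
  rewrite (bigD1 r) //= big1 ?addr0; last by move=> t /negbTE; rewrite eq_sym => /negbT /hD ->; rewrite scale0r.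
  rewrite mderivX -scalerAr -scalerA; congr (_ *: _).
  case: (posnP (m' r)) => [->|hr]; first by rewrite !scale0r.
  congr (_ *: _); rewrite -mpolyXD; congr 'X_[_]; apply/mnmP => i.
  rewrite mnmDE mnmBE mnm1E; case: (r =P i) => [<-|_] /=; lia.
rewrite mcoeffZ !mcoeffX; case: (m' =P m) => [->//|_]; by rewrite !mulr0.
Qed.

End Gen.

Section Spec.
Variables (C : fieldType) (e k : nat).
Local Notation u := (2 * k).+1.
Local Notation N := (e * u)%N.

Definition sgf (x : 'I_N) : 'I_N :=
  mxtens_index ((mxtens_unindex x).1, piu (mxtens_unindex x).2).

Lemma sgfK : involutive sgf.
Proof. move=> x; case: (mxtens_indexP x) => a j; by rewrite /sgf !mxtens_indexK /= piuK. Qed.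

Definition sg : 'S_N := perm (inv_inj sgfK).

Lemma sg_tens a j : sg (mxtens_index (a, j)) = mxtens_index (a, piu j).
Proof. by rewrite permE /sgf mxtens_indexK. Qed.

Lemma sgK : involutive sg.
Proof. by move=> x; rewrite !permE sgfK. Qed.

Lemma tens_inv (A : 'M[C]_e) x y :
  (A *t (1%:M : 'M[C]_u)) (sg x) (sg y) = (A *t (1%:M : 'M[C]_u)) x y.
Proof.
case: (mxtens_indexP x) => a j; case: (mxtens_indexP y) => b l.
by rewrite !sg_tens !tensmxE !mxE (inj_eq (inv_inj (@piuK k))).
Qed.

Lemma msym_sgK : involutive (msym sg : {mpoly C[N]} -> {mpoly C[N]}).
Proof.
move=> p; apply/mpolyP => m; rewrite !mcoeff_sym; congr (p@_ _).
by apply/mnmP => i; rewrite !mnmE sgK.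
Qed.

Lemma blockdeg_sym (m : 'X_{1..N}) j :
  blockdeg [multinom m (sg i) | i < N] j = blockdeg m (piu j).
Proof. by apply: eq_bigr => a _; rewrite mnmE sg_tens. Qed.

Lemma wsum (X : 'M[C]_u) (m : 'X_{1..N}) :
  \sum_r ((1%:M : 'M[C]_e) *t X) r r * (m r)%:R =
  \sum_j X j j * (blockdeg m j)%:R.
Proof.
rewrite (reindex (fun ij : 'I_e * 'I_u => mxtens_index ij)); last first.
  by exists (@mxtens_unindex e u) => x _; rewrite (mxtens_indexK, mxtens_unindexK).
set F := fun r : 'I_N => ((1%:M : 'M[C]_e) *t X) r r * (m r)%:R.
rewrite [LHS](_ : _ = \sum_(a < e) \sum_(j < u) F (mxtens_index (a, j))); last first.
  by rewrite pair_big; apply: eq_bigr => -[].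
rewrite exchange_big /=; apply: eq_bigr => j _.
rewrite /blockdeg natr_sum mulr_sumr; apply: eq_bigr => a _.
by rewrite /F tensmxE mxE eqxx mul1r.
Qed.

Lemma tens_diag (X : 'M[C]_u) : is_diag_mx X ->
  forall r t, r != t -> ((1%:M : 'M[C]_e) *t X) r t = 0.
Proof.
move=> /is_diag_mxP hX r t.
case: (mxtens_indexP r) => a j; case: (mxtens_indexP t) => b l.
rewrite tensmxE mxE => hne.
case: (a =P b) => [eab|]; last by rewrite mul0r.
rewrite hX ?mulr0 //; apply: contraNneq hne => /val_inj ->; by rewrite eab.
Qed.

Lemma soU_entry (X : 'M[C]_u) : is_diag_mx X -> forall r t,
  (X^T *m gramU C k + gramU C k *m X) r t = gramU C k r t * (X r r + X t t).
Proof.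
move=> /is_diag_mxP hX r t; set G := gramU C k.
rewrite [LHS]mxE [X in X + _]mxE [X in _ + X]mxE (bigD1 r) //= [X in _ + X](bigD1 t) //= !big1.
- by rewrite !addr0 mxE mulrDr mulrC.
- by move=> l hl; rewrite hX ?mulr0.
- by move=> l hl; rewrite mxE hX ?mul0r // eq_sym.
Qed.


Lemma sum_delta (a : 'I_u) (F : 'I_u -> C) :
  \sum_j (j == a)%:R * F j = F a.
Proof.
rewrite (bigD1 a) //= eqxx mul1r big1 ?addr0 // => j /negbTE ->; by rewrite mul0r.
Qed.

Lemma sum_delta_k (a : 'I_k) (F : 'I_k -> C) :
  \sum_j F j * (j == a)%:R = F a.
Proof.
rewrite (bigD1 a) //= eqxx mulr1 big1 ?addr0 // => j /negbTE ->; by rewrite mulr0.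
Qed.

Lemma int_nat_R (a b : nat) : ((a%:Z - b%:Z)%:~R : C) = a%:R - b%:R.
Proof. by rewrite mulrzBr -!pmulrn. Qed.

Lemma actG_coef (X : 'M[C]_u) (p : {mpoly C[N]}) (m : 'X_{1..N}) : is_diag_mx X ->
  (actG X p)@_m = (\sum_j X j j * (blockdeg m j)%:R) * p@_m.
Proof. by move=> hX; rewrite /actG symder_diag ?wsum //; apply: tens_diag. Qed.

Lemma cartan_facts (X : 'M[C]_u) : (2%:R != 0 :> C) -> cartanU X ->
  X ord0 ord0 = 0 /\ forall i, X (udidx i) (udidx i) = - X (uidx i) (uidx i).
Proof.
move=> h2 /andP [/eqP hso hd].
have E r t : gramU C k r t * (X r r + X t t) = 0.
  by rewrite -soU_entry // hso mxE.
split.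
  have := E ord0 ord0; rewrite mxE !eqxx /= mul1r -mulr2n -mulr_natl.
  by move/eqP; rewrite mulf_eq0 (negbTE h2) /= => /eqP.
move=> i; have := E (uidx i) (udidx i); rewrite mxE.
have -> : [exists j, (uidx i == uidx j) && (udidx i == udidx j)
   || (uidx i == udidx j) && (udidx i == uidx j)].
  by apply/existsP; exists i; rewrite !eqxx.
rewrite orbT mul1r => /eqP; rewrite addr_eq0 => /eqP ->; by rewrite opprK.
Qed.


Lemma zero_uidx (i : 'I_k) : (ord0 == uidx i :> 'I_u) = false.
Proof. by rewrite eq_sym uidx_0. Qed.
Lemma zero_udidx (i : 'I_k) : (ord0 == udidx i :> 'I_u) = false.
Proof. by rewrite eq_sym udidx_0. Qed.

Definition xi (i : 'I_k) (j : 'I_u) : C := (j == uidx i)%:R - (j == udidx i)%:R.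
Definition Xi (i : 'I_k) : 'M[C]_u := \matrix_(j, l) ((j == l)%:R * xi i j).

Lemma Xi_diag i : is_diag_mx (Xi i).
Proof. apply/is_diag_mxP => j l hjl; rewrite mxE. by case: (j =P l) => [h|_]; [move: hjl; rewrite h eqxx | rewrite mul0r]. Qed.

Lemma XiE i j : Xi i j j = xi i j.
Proof. by rewrite mxE eqxx mul1r. Qed.

Lemma Xi_cartan i : cartanU (Xi i).
Proof.
rewrite /cartanU Xi_diag andbT; apply/eqP/matrixP => r t.
rewrite soU_entry ?Xi_diag // !XiE [RHS]mxE mxE.
case: orP => [[/andP [/eqP -> /eqP ->]|/existsP [j /orP [/andP [/eqP -> /eqP ->]|/andP [/eqP -> /eqP ->]]]]|_]; last by rewrite mul0r.
- by rewrite /xi !zero_uidx !zero_udidx subrr addr0 mulr0.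
- by rewrite /xi uidx_eq uidx_udidx udidx_eq udidx_uidx subr0 sub0r addrN mulr0.
- by rewrite /xi uidx_eq uidx_udidx udidx_eq udidx_uidx subr0 sub0r addNr mulr0.
Qed.

Lemma ws_char (chi : 'I_k -> int) (p : {mpoly C[N]}) :
  (forall x y : int, (x%:~R : C) = y%:~R -> x = y) ->
  weight_space chi p -> forall m, m \in msupp p -> forall i,
  (blockdeg m (uidx i))%:Z = (blockdeg m (udidx i))%:Z + chi i.
Proof.
move=> hinj hw m hm i.
have := congr1 (mcoeff m) (hw _ (Xi_cartan i)).
rewrite actG_coef ?Xi_diag // mcoeffZ => /mulIf.
rewrite mcoeff_msupp in hm => /(_ hm).
under eq_bigr do rewrite XiE /xi mulrBl.
rewrite sumrB !sum_delta /weight_of.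
under [RHS]eq_bigr do rewrite XiE /xi uidx_eq uidx_udidx subr0.
rewrite sum_delta_k -int_nat_R => /hinj h.
by rewrite -h addrC subrK.
Qed.

Lemma rhs_ws (chi : 'I_k -> int) (p : {mpoly C[N]}) : (2%:R != 0 :> C) ->
  (forall m, m \in msupp p -> forall i,
     (blockdeg m (uidx i))%:Z = (blockdeg m (udidx i))%:Z + chi i) ->
  weight_space chi p.
Proof.
move=> h2 hp X hX; apply/mpolyP => m.
have [h0 hd] := cartan_facts h2 hX.
rewrite actG_coef; last by case/andP: hX.
rewrite mcoeffZ; have [hm|hm] := boolP (m \in msupp p); last first.
  by move: hm; rewrite mcoeff_msupp negbK => /eqP ->; rewrite !mulr0.
congr (_ * _); rewrite sum_split h0 mul0r add0r /weight_of.
apply: eq_bigr => i _; rewrite hd mulNr -mulrBr mulrC; congr (_ * _).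
have -> : chi i = (blockdeg m (uidx i))%:Z - (blockdeg m (udidx i))%:Z.
  by rewrite (hp m hm i) addrC addKr.
by rewrite int_nat_R.
Qed.

End Spec.

Theorem mainTheorem8 (R : realType) (e k : nat) (hk : (0 < k)%N)
  (chi : 'I_k -> int) :
  @H_iso R[i] e k (@weight_space R[i] e k chi) (@rhs_space R[i] e k chi).
Proof.
have hinj : forall x y : int, (x%:~R : R[i]) = y%:~R -> x = y by move=> x y /intr_inj.
have h2 : (2%:R != 0 :> R[i]) by rewrite pnatr_eq0.
have supp_sym : forall (p : {mpoly R[i][(e * (2 * k).+1)%N]}) m,
    m \in msupp (msym (sg e k) p) -> [multinom m (sg e k i) | i < (e * (2 * k).+1)%N] \in msupp p.
  by move=> p m; rewrite !mcoeff_msupp mcoeff_sym.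
exists (msym (sg e k)); split.
- move=> p hp m hm i; have := ws_char hinj hp (supp_sym _ _ hm) i.
  by rewrite !blockdeg_sym piu_uidx piu_udidx.
- by move=> p1 p2 _ _ h; rewrite -(msym_sgK p1) h msym_sgK.
- move=> q hq; exists (msym (sg e k) q); last exact: msym_sgK.
  apply: rhs_ws h2 _ => m hm i; have := hq _ (supp_sym _ _ hm) i.
  by rewrite !blockdeg_sym piu_uidx piu_udidx.
- move=> A p _; rewrite /actH /=; apply: msym_symder => a b; exact: tens_inv.
Qed.
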